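(* Let $G$ be a group and $\mathcal S$ a stable admissible family of subgroups of $G$. Then the monoid $\widehat G_{\mathcal S}$ is a group.
   Context: An admissible family of subgroups of $G$ is a family $\mathcal S$ closed under conjugation such that the intersection of any finitely many members contains a member. It is stable if for all $K\le H$ in $\mathcal S$ there is $L\in\mathcal S$ with $L\le K$ and $L$ normal in $H$. $\widehat G_{\mathcal S}$ is the set of functions $f$ assigning to each $H\in\mathcal S$ a right coset $f(H)\in H\backslash G$ such that $f(K)\subseteq f(H)$ whenever $K\subseteq H$ are in $\mathcal S$ (i.e. $\widehat G_{\mathcal S}=\varprojlim H\backslash G$). For $f\in\widehat G_{\mathcal S}$ and $H\in\mathcal S$, write $H^f:=x^{-1}Hx$ where $f(H)=Hx$ (independent of the choice of $x$). The product is $(f\cdot f')(H)=f(H)\,f'(H^f)$ (product of subsets of $G$), which is associative with identity $e(H)=H$, making $\widehat G_{\mathcal S}$ a monoid. *)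

(* Defs.v *)
From Stdlib Require Import List.

Record Grp := {
  carrier :> Type;
  gmul : carrier -> carrier -> carrier;
  gone : carrier;
  ginv : carrier -> carrier;
  gmulA : forall x y z, gmul x (gmul y z) = gmul (gmul x y) z;
  gmul1 : forall x, gmul gone x = x;
  gmulV : forall x, gmul (ginv x) x = gone
}.

Arguments gmul {g}.
Arguments gone {g}.
Arguments ginv {g}.

Section Defs.
Variable G : Grp.

Definition gset := G -> Prop.

Definition subset (A B : gset) : Prop := forall z, A z -> B z.

Definition is_subgroup (H : gset) : Prop :=
  H gone /\ (forall x y, H x -> H y -> H (gmul x y)) /\ (forall x, H x -> H (ginv x)).

Definition rcoset (H : gset) (x : G) : gset := fun z => H (gmul z (ginv x)).

(* conjugate x^{-1} H x :  y belongs to it iff x y x^{-1} belongs to H *)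
Definition conjg (H : gset) (x : G) : gset := fun y => H (gmul (gmul x y) (ginv x)).

Definition setmul (A B : gset) : gset :=
  fun z => exists a b, A a /\ B b /\ z = gmul a b.

Definition bigcap (l : list gset) : gset := fun z => forall H, In H l -> H z.

Definition admissible (S : gset -> Prop) : Prop :=
  (forall H, S H -> is_subgroup H) /\
  (forall H x, S H -> S (conjg H x)) /\
  (forall l : list gset, (forall H, In H l -> S H) ->
      exists L, S L /\ subset L (bigcap l)).

Definition normal_in (L H : gset) : Prop :=
  forall h y, H h -> L y -> L (gmul (gmul h y) (ginv h)).

Definition stable (S : gset -> Prop) : Prop :=
  forall K H, S K -> S H -> subset K H ->
    exists L, S L /\ subset L K /\ normal_in L H.

(* Elements of \hat G_S: functions on subgroups whose values on members of S
   are right cosets, compatible with inclusion. Only the values on S matter. *)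
Definition in_Ghat (S : gset -> Prop) (f : gset -> gset) : Prop :=
  (forall H, S H -> exists x, f H = rcoset H x) /\
  (forall K H, S K -> S H -> subset K H -> subset (f K) (f H)).

(* H^f := x^{-1} H x where f(H) = H x *)
Definition Hf (f : gset -> gset) (H : gset) : gset :=
  fun y => exists x, f H = rcoset H x /\ conjg H x y.

Definition ghat_mul (f f' : gset -> gset) : gset -> gset :=
  fun H => setmul (f H) (f' (Hf f H)).

(* identity e(H) = H; equality in \hat G_S is equality on all H in S *)
Definition ghat_eq (S : gset -> Prop) (f g : gset -> gset) : Prop :=
  forall H, S H -> f H = g H.

End Defs.

Arguments subset {G}.
Arguments is_subgroup {G}.
Arguments rcoset {G}.
Arguments conjg {G}.
Arguments setmul {G}.
Arguments admissible {G}.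
Arguments stable {G}.
Arguments in_Ghat {G}.
Arguments Hf {G}.
Arguments ghat_mul {G}.
Arguments ghat_eq {G}.

(* Main.v *)
Require Import Defs.
From Stdlib Require Import List FunctionalExtensionality PropExtensionality.

Section Aux.
Variable G : Grp.
Local Infix "**" := (@gmul G) (at level 40, left associativity).

Lemma assocR (a b c : G) : (a ** b) ** c = a ** (b ** c).
Proof. now rewrite gmulA. Qed.

Lemma mulgV (x : G) : x ** ginv x = gone.
Proof.
  rewrite <- (gmul1 G (x ** ginv x)).
  rewrite <- (gmulV G (ginv x)) at 1.
  rewrite <- gmulA. rewrite (gmulA _ (ginv x) x (ginv x)). rewrite gmulV, gmul1.
  apply gmulV.
Qed.

Lemma mulg1 (x : G) : x ** gone = x.
Proof. rewrite <- (gmulV G x), gmulA, mulgV, gmul1. reflexivity. Qed.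

Lemma mulKg (a b : G) : ginv a ** (a ** b) = b.
Proof. rewrite gmulA, gmulV, gmul1. reflexivity. Qed.

Lemma mulKVg (a b : G) : a ** (ginv a ** b) = b.
Proof. rewrite gmulA, mulgV, gmul1. reflexivity. Qed.

Lemma invK (a : G) : ginv (ginv a) = a.
Proof. rewrite <- (mulg1 (ginv (ginv a))), <- (gmulV G a), gmulA, gmulV, gmul1. reflexivity. Qed.

Lemma invM (a b : G) : ginv (a ** b) = ginv b ** ginv a.
Proof.
  assert (h : a ** b ** (ginv b ** ginv a) = gone) by (rewrite assocR, mulKVg, mulgV; reflexivity).
  rewrite <- (mulg1 (ginv (a ** b))), <- h, gmulA, gmulV, gmul1. reflexivity.
Qed.

Lemma inv1 : ginv (@gone G) = gone.
Proof. rewrite <- (gmul1 G (ginv gone)). apply mulgV. Qed.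

End Aux.

Ltac gs := repeat (rewrite ?invM, ?invK, ?inv1, ?assocR, ?mulKg, ?mulKVg,
                     ?gmulV, ?mulgV, ?gmul1, ?mulg1); try reflexivity.

Lemma seteq (G : Grp) (A B : gset G) : (forall z, A z <-> B z) -> A = B.
Proof.
  intro h. apply functional_extensionality. intro z.
  apply propositional_extensionality. apply h.
Qed.

Section Main.
Variable G : Grp.
Local Infix "**" := (@gmul G) (at level 40, left associativity).

Lemma sg_mem (H : gset G) a b : is_subgroup H -> a = b -> H a -> H b.
Proof. intros _ -> h; exact h. Qed.

Lemma rcoset_eq (H : gset G) x y : is_subgroup H -> H (x ** ginv y) ->
  rcoset H x = rcoset H y.
Proof.
  intros [h1 [hm hi]] hxy. apply seteq; intro z; unfold rcoset; split; intro hz.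
  - assert (E : z ** ginv y = (z ** ginv x) ** (x ** ginv y)) by gs.
    rewrite E. auto.
  - assert (E : z ** ginv x = (z ** ginv y) ** ginv (x ** ginv y)) by gs.
    rewrite E. auto.
Qed.

Lemma rcoset_self (H : gset G) x : is_subgroup H -> rcoset H x x.
Proof. intros [h1 _]. unfold rcoset. rewrite mulgV. exact h1. Qed.

Lemma rcoset_same (H : gset G) x y : is_subgroup H -> rcoset H x = rcoset H y ->
  H (x ** ginv y).
Proof. intros hs e. pose proof (rcoset_self H x hs) as h. rewrite e in h. exact h. Qed.

Lemma conjg_eq (H : gset G) x y : is_subgroup H -> H (x ** ginv y) ->
  conjg H x = conjg H y.
Proof.
  intros [h1 [hm hi]] hxy. set (h := x ** ginv y).
  apply seteq; intro z; unfold conjg; split; intro hz.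
  - assert (E : y ** z ** ginv y = ginv h ** ((x ** z ** ginv x) ** h))
      by (unfold h; gs).
    rewrite E. auto.
  - assert (E : x ** z ** ginv x = h ** ((y ** z ** ginv y) ** ginv h))
      by (unfold h; gs).
    rewrite E. auto.
Qed.

Lemma Hf_eq (f : gset G -> gset G) H x : is_subgroup H -> f H = rcoset H x ->
  Hf f H = conjg H x.
Proof.
  intros hs e. apply seteq; intro y; unfold Hf; split.
  - intros [x' [e' hy]]. rewrite e in e'.
    rewrite (conjg_eq H x x' hs (rcoset_same H x x' hs e')). exact hy.
  - intro hy. exists x. auto.
Qed.

Variable S : gset G -> Prop.
Hypothesis hadm : admissible S.
Hypothesis hstab : stable S.
Variable f : gset G -> gset G.
Hypothesis hf : in_Ghat S f.

Lemma sub_of H : S H -> is_subgroup H.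
Proof. destruct hadm as [a _]. auto. Qed.

Lemma exist_pre K : S K ->
  exists H x, S H /\ f H = rcoset H x /\ subset (conjg H x) K.
Proof.
  intro SK. destruct hadm as [hsub [hconj hint]]. destruct hf as [hf1 hf2].
  destruct (hf1 K SK) as [x ex].
  destruct (hint (K :: conjg K (ginv x) :: nil)) as [M [SM hM]].
  { intros H [<-|[<-|[]]]; auto. }
  assert (MK : subset M K) by (intros z hz; apply (hM z hz); simpl; auto).
  assert (MK' : subset M (conjg K (ginv x))) by (intros z hz; apply (hM z hz); simpl; auto).
  destruct (hstab M K SM SK MK) as [M' [SM' [M'M hn]]].
  destruct (hf1 M' SM') as [m em].
  exists M', m. split; [exact SM'|]. split; [exact em|].
  assert (hm : K (m ** ginv x)).
  { assert (h := hf2 M' K SM' SK (fun z hz => MK z (M'M z hz)) m).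
    rewrite em, ex in h. apply h. apply rcoset_self. auto. }
  intros z hz. unfold conjg in hz.
  destruct (sub_of K SK) as [k1 [km ki]].
  assert (hw : M' (x ** z ** ginv x)).
  { assert (E : x ** z ** ginv x =
       ginv (m ** ginv x) ** (m ** z ** ginv m) ** ginv (ginv (m ** ginv x))) by gs.
    rewrite E. apply hn; auto. }
  apply M'M in hw. apply MK' in hw.
  unfold conjg in hw.
  assert (E : ginv x ** (x ** z ** ginv x) ** ginv (ginv x) = z) by gs.
  rewrite E in hw. exact hw.
Qed.

Lemma compat K H1 x1 H3 x3 : S K -> S H1 -> S H3 -> subset H3 H1 ->
  f H1 = rcoset H1 x1 -> f H3 = rcoset H3 x3 -> subset (conjg H1 x1) K ->
  K (ginv x1 ** x3).
Proof.
  intros SK S1 S3 s31 e1 e3 hc. destruct hf as [_ hf2].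
  assert (h := hf2 H3 H1 S3 S1 s31 x3). rewrite e1, e3 in h.
  specialize (h (rcoset_self H3 x3 (sub_of H3 S3))). unfold rcoset in h.
  apply hc. unfold conjg.
  assert (E : x1 ** (ginv x1 ** x3) ** ginv x1 = x3 ** ginv x1) by gs.
  rewrite E. exact h.
Qed.

Lemma compat2 K H1 x1 H2 x2 : S K -> S H1 -> S H2 ->
  f H1 = rcoset H1 x1 -> f H2 = rcoset H2 x2 -> subset (conjg H1 x1) K ->
  subset (conjg H2 x2) K -> K (ginv x1 ** ginv (ginv x2)).
Proof.
  intros SK S1 S2 e1 e2 c1 c2. destruct hadm as [hsub [hconj hint]].
  destruct (hint (H1 :: H2 :: nil)) as [H3 [S3 h3]].
  { intros H [<-|[<-|[]]]; auto. }
  destruct hf as [hf1 _]. destruct (hf1 H3 S3) as [x3 e3].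
  assert (a1 := compat K H1 x1 H3 x3 SK S1 S3 (fun z hz => h3 z hz H1 (or_introl eq_refl)) e1 e3 c1).
  assert (a2 := compat K H2 x2 H3 x3 SK S2 S3 (fun z hz => h3 z hz H2 (or_intror (or_introl eq_refl))) e2 e3 c2).
  destruct (sub_of K SK) as [k1 [km ki]].
  assert (E : ginv x1 ** ginv (ginv x2) = (ginv x1 ** x3) ** ginv (ginv x2 ** x3)) by gs.
  rewrite E. auto.
Qed.

Definition ginvf : gset G -> gset G := fun K z =>
  exists H x, S H /\ f H = rcoset H x /\ subset (conjg H x) K /\ rcoset K (ginv x) z.

Lemma ginvf_eq K H x : S K -> S H -> f H = rcoset H x -> subset (conjg H x) K ->
  ginvf K = rcoset K (ginv x).
Proof.
  intros SK SH e c. apply seteq; intro z; split.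
  - intros [H' [x' [SH' [e' [c' hz]]]]].
    rewrite (rcoset_eq K (ginv x) (ginv x') (sub_of K SK)); [exact hz|].
    exact (compat2 K H x H' x' SK SH SH' e e' c c').
  - intro hz. exists H, x. auto.
Qed.

Lemma main_inv : exists g, in_Ghat S g /\
      ghat_eq S (ghat_mul f g) (fun H => H) /\
      ghat_eq S (ghat_mul g f) (fun H => H).
Proof.
  destruct hadm as [hsub [hconj hint]]. destruct hf as [hf1 hf2].
  exists ginvf. split; [split|split].
  - intros K SK. destruct (exist_pre K SK) as [H [x [SH [e c]]]].
    exists (ginv x). exact (ginvf_eq K H x SK SH e c).
  - intros K1 K2 S1 S2 s12. destruct (exist_pre K1 S1) as [H [x [SH [e c]]]].
    rewrite (ginvf_eq K1 H x S1 SH e c).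
    rewrite (ginvf_eq K2 H x S2 SH e (fun z hz => s12 z (c z hz))).
    intros z. unfold rcoset. apply s12.
  - intros H SH. destruct (hf1 H SH) as [x e]. unfold ghat_mul.
    rewrite (Hf_eq f H x (sub_of H SH) e).
    assert (SH' : S (conjg H x)) by auto.
    rewrite (ginvf_eq (conjg H x) H x SH' SH e (fun z hz => hz)), e.
    destruct (sub_of H SH) as [h1 [hm hi]].
    apply seteq; intro z; unfold setmul, rcoset, conjg; split.
    + intros [a [b [ha [hb ->]]]].
      assert (E : x ** (b ** ginv (ginv x)) ** ginv x = x ** b) by gs.
      rewrite E in hb.
      assert (E2 : a ** b = (a ** ginv x) ** (x ** b)) by gs.
      rewrite E2. auto.
    + intro hz. exists (z ** x), (ginv x). split; [|split].
      * assert (E : z ** x ** ginv x = z) by gs. rewrite E. exact hz.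
      * assert (E : x ** (ginv x ** ginv (ginv x)) ** ginv x = gone) by gs.
        rewrite E. exact h1.
      * gs.
  - intros K SK. destruct (exist_pre K SK) as [H [y [SH [e c]]]].
    unfold ghat_mul. rewrite (ginvf_eq K H y SK SH e c).
    assert (Ke : rcoset K (ginv y) = rcoset K (ginv y)) by reflexivity.
    rewrite (Hf_eq ginvf K (ginv y) (sub_of K SK) (ginvf_eq K H y SK SH e c)).
    set (K' := conjg K (ginv y)).
    assert (SK' : S K') by (unfold K'; auto).
    assert (HK' : subset H K').
    { intros z hz. apply c. unfold K', conjg.
      assert (E : y ** (ginv y ** z ** ginv (ginv y)) ** ginv y = z) by gs.
      unfold conjg. rewrite E. exact hz. }
    destruct (hf1 K' SK') as [w ew].
    assert (hy : rcoset K' w y).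
    { rewrite <- ew. apply (hf2 H K' SH SK' HK'). rewrite e. apply rcoset_self.
      apply sub_of; exact SH. }
    assert (fK' : f K' = rcoset K' y).
    { rewrite ew. symmetry. apply rcoset_eq; [apply sub_of; exact SK'| exact hy]. }
    rewrite fK'. unfold K'.
    destruct (sub_of K SK) as [h1 [hm hi]].
    apply seteq; intro z; unfold setmul, rcoset, conjg; split.
    + intros [a [b [ha [hb ->]]]].
      assert (E : ginv y ** (b ** ginv y) ** ginv (ginv y) = ginv y ** b) by gs.
      rewrite E in hb.
      assert (E1 : a ** ginv (ginv y) = a ** y) by gs. rewrite E1 in ha.
      assert (E2 : a ** b = (a ** y) ** (ginv y ** b)) by gs.
      rewrite E2. auto.
    + intro hz. exists (z ** ginv y), y. split; [|split].
      * assert (E : z ** ginv y ** ginv (ginv y) = z) by gs. rewrite E. exact hz.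
      * assert (E : ginv y ** (y ** ginv y) ** ginv (ginv y) = gone) by gs.
        rewrite E. exact h1.
      * gs.
Qed.

End Main.

Theorem lemma6p2 (G : Grp) (S : gset G -> Prop)
  (hadm : admissible S) (hstab : stable S) :
  forall f, in_Ghat S f ->
    exists g, in_Ghat S g /\
      ghat_eq S (ghat_mul f g) (fun H => H) /\
      ghat_eq S (ghat_mul g f) (fun H => H).
Proof.
  intros f hf. exact (main_inv G S hadm hstab f hf).
Qed.
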